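(* Let $(S,K,I)$ be a split graph and let $P=v_1\ldots v_n$, with $n\geq 2$, be an induced path in the factor graph $\Phi(S)$. Then $\max\{d_i: i\in[n]\}\in\{d_1,d_2,d_{n-1},d_n\}$. Moreover, if $\max\{d_i:i\in[n]\}=d_1$, then: (1) for each $i\geq 1$: $d_i\geq d_j$ and $N_i\supseteq N_j$ for all $j$ with $i+2\leq j\leq n$; (2) for each $i\geq 1$: $N_i\supseteq\bigcup_{j=i+2}^n N_j$; in particular $\bigcup_{i=1}^n N_i=N_1\cup N_2$; (3) $d_{2k}\geq d_{2k+2}$ and $d_{2k-1}\geq d_{2k+1}$ for all $k\geq 1$ (whenever the indices are at most $n$); (4) $\min\{d_i: i\in[n]\}\in\{d_{n-1},d_n\}$.
   Context: A split graph $(S,K,I)$ is a graph $S$ together with a fixed partition $V(S)=K\dot\cup I$, where $K$ is a clique and $I$ is an independent set. For a vertex $v_i$ of $S$, $N_i$ denotes its open neighborhood in $S$ and $d_i=|N_i|$ its degree in $S$; for $u,v$ write $\eta_{uv}=|N_u\cap N_v|$. The factor graph $\Phi(S)$ is the loopless multigraph with vertex set $I$ in which, for distinct $u,v\in I$, there is one edge joining $u$ and $v$ for each 2-switch of $S$ acting on $u$ and $v$ (a 2-switch replaces edges $ab,cd$ with $ac,bd$ when $ab,cd\in E(S)$ and $ac,bd\notin E(S)$); equivalently, the multiplicity of the edge $uv$ is $\sigma_{uv}=(d_u-\eta_{uv})(d_v-\eta_{uv})$, and $u,v$ are adjacent iff $\sigma_{uv}>0$. An induced path $v_1\ldots v_n$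 in $\Phi(S)$ consists of distinct vertices with consecutive ones adjacent and no other pair adjacent (multiplicities ignored for adjacency). *)

(* Defs.v *)
From mathcomp Require Import all_boot.
Set Implicit Arguments. Unset Strict Implicit. Unset Printing Implicit Defensive.

Definition simple_graph (T : finType) (e : rel T) : Prop :=
  (forall x, ~~ e x x) /\ (forall x y, e x y = e y x).

Definition split_graph (T : finType) (e : rel T) (K I : {set T}) : Prop :=
  [/\ simple_graph e,
      K :|: I = [set: T],
      [disjoint K & I],
      (forall x y, x \in K -> y \in K -> x != y -> e x y) &
      (forall x y, x \in I -> y \in I -> ~~ e x y)].

Definition nbhd (T : finType) (e : rel T) (v : T) : {set T} := [set u | e v u].
Definition deg (T : finType) (e : rel T) (v : T) : nat := #|nbhd e v|.
Definition eta (T : finType) (e : rel T) (u v : T) : nat :=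
  #|nbhd e u :&: nbhd e v|.

(* multiplicity of the edge uv in the factor graph Phi(S) *)
Definition sigma (T : finType) (e : rel T) (u v : T) : nat :=
  (deg e u - eta e u v) * (deg e v - eta e u v).

Definition phi_adj (T : finType) (e : rel T) (I : {set T}) (u v : T) : bool :=
  [&& u \in I, v \in I, u != v & 0 < sigma e u v].

Definition induced_path (T : finType) (e : rel T) (I : {set T})
    (n : nat) (v : nat -> T) : Prop :=
  [/\ forall i, 1 <= i <= n -> v i \in I,
      forall i j, 1 <= i <= n -> 1 <= j <= n -> v i = v j -> i = j,
      forall i, 1 <= i < n -> phi_adj e I (v i) (v i.+1) &
      forall i j, 1 <= i -> i.+1 < j <= n -> ~~ phi_adj e I (v i) (v j)].

(* Main.v *)
Require Import Defs.
From mathcomp Require Import all_boot zify.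

Lemma bigmax_arg (r : seq nat) (F : nat -> nat) :
  r != [::] -> exists2 k, k \in r & \max_(i <- r) F i = F k.
Proof.
elim: r => [//|a r IH] _.
case: r IH => [|b r] IH.
  by exists a; rewrite ?inE ?big_cons ?big_nil ?maxn0.
have [k kr Hk] := IH isT.
rewrite big_cons Hk.
case: (leqP (F a) (F k)) => H.
  by exists k => //; rewrite inE kr orbT.
by exists a => //; rewrite inE eqxx.
Qed.

Lemma bigmin_le (r : seq nat) (F : nat -> nat) x0 k :
  k \in r -> \big[minn/x0]_(i <- r) F i <= F k.
Proof.
elim: r => [//|a r IH]; rewrite inE big_cons => /orP[/eqP->|kr].
  exact: geq_minl.
exact: leq_trans (geq_minr _ _) (IH kr).
Qed.

Lemma sub_of_card {T : finType} {A B : {set T}} :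
  (A \subset B \/ B \subset A) -> #|A| <= #|B| -> A \subset B.
Proof.
case=> // BA c.
have /eqP -> : B == A by rewrite eqEcard BA c.
exact: subxx.
Qed.

Lemma bigcup_seq_sub (T : finType) (r : seq nat) (F : nat -> {set T}) (U : {set T}) :
  (forall j, j \in r -> F j \subset U) -> \bigcup_(j <- r) F j \subset U.
Proof.
elim: r => [|a r IH] H; first by rewrite big_nil sub0set.
rewrite big_cons subUset H ?inE ?eqxx // IH // => j jr.
by apply: H; rewrite inE jr orbT.
Qed.

Lemma bigmin_ge (r : seq nat) (F : nat -> nat) x0 c :
  (forall k, k \in r -> c <= F k) -> c <= x0 -> c <= \big[minn/x0]_(i <- r) F i.
Proof.
elim: r => [|a r IH] H H0; first by rewrite big_nil.
rewrite big_cons leq_min H ?inE ?eqxx // IH // => j jr.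
by apply: H; rewrite inE jr orbT.
Qed.

Ltac clia := repeat match goal with
  | H : is_true (~~ (_ \subset _)) |- _ => clear H
  | H : is_true (_ \subset _) |- _ => clear H
  end; lia.

Theorem theorem2p4 (T : finType) (e : rel T) (K I : {set T})
    (n : nat) (v : nat -> T) :
  split_graph e K I -> 2 <= n -> induced_path e I n v ->
  let d i := deg e (v i) in
  let N i := nbhd e (v i) in
  (\max_(1 <= i < n.+1) d i \in [:: d 1; d 2; d n.-1; d n]) /\
  (\max_(1 <= i < n.+1) d i = d 1 ->
     [/\ (* (1) *)
         (forall i j, 1 <= i -> i + 2 <= j <= n ->
            d j <= d i /\ N j \subset N i),
         (* (2) *)
         (forall i, 1 <= i <= n ->
            \bigcup_(i + 2 <= j < n.+1) N j \subset N i),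
         \bigcup_(1 <= i < n.+1) N i = N 1 :|: N 2,
         (* (3) *)
         (forall k, 1 <= k ->
            (2 * k + 2 <= n -> d (2 * k + 2) <= d (2 * k)) /\
            (2 * k + 1 <= n -> d (2 * k + 1) <= d (2 * k - 1))) &
         (* (4) *)
         \big[minn/d 1]_(1 <= i < n.+1) d i \in [:: d n.-1; d n]]).
Proof.
move=> _ n2 [HI _ Hadj Hnadj] d N.
have key : forall x y, x \in I -> y \in I -> ~~ phi_adj e I x y ->
    nbhd e x \subset nbhd e y \/ nbhd e y \subset nbhd e x.
  move=> x y xI yI; rewrite /phi_adj xI yI /=.
  case: eqVneq => [->|nxy] /=; first by left; exact: subxx.
  rewrite lt0n negbK muln_eq0 !subn_eq0 => /orP[]H.
    left; have /eqP/setIidPl // : nbhd e x :&: nbhd e y == nbhd e x.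
    by rewrite eqEcard subsetIl.
  right; have /eqP/setIidPr // : nbhd e x :&: nbhd e y == nbhd e y.
  by rewrite eqEcard subsetIr.
have adj : forall x y, phi_adj e I x y ->
    ~~ (nbhd e x \subset nbhd e y) /\ ~~ (nbhd e y \subset nbhd e x).
  move=> x y /and4P[_ _ _ Hs]; split; apply/negP => Hsub; move: Hs;
    rewrite /sigma /eta.
    by rewrite (setIidPl Hsub) /deg subnn mul0n.
  by rewrite (setIidPr Hsub) /deg subnn muln0.
have Hinc : forall i, 1 <= i < n -> ~~ (N i \subset N i.+1) /\ ~~ (N i.+1 \subset N i).
  by move=> i Hi; apply: adj; apply: Hadj.
have Hcmp : forall i j, 1 <= i <= n -> 1 <= j <= n -> (i + 2 <= j \/ j + 2 <= i) ->
    N i \subset N j \/ N j \subset N i.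
  move=> i j Hi Hj [] H.
    by apply: key; [apply: HI | apply: HI | apply: Hnadj; clia].
  by apply/or_comm; apply: key; [apply: HI | apply: HI | apply: Hnadj; clia].
have dmax : forall j, 1 <= j <= n -> d j <= \max_(1 <= i < n.+1) d i.
  by move=> j Hj; apply: leq_bigmax_seq => //; rewrite mem_index_iota; clia.
split.
  have [m] := @bigmax_arg (index_iota 1 n.+1) d
     (ltac:(rewrite /index_iota; case: n n2 {Hinc Hcmp dmax Hadj Hnadj HI} => //)).
  rewrite mem_index_iota => Hm Hmax.
  rewrite Hmax !inE.
  case: (m =P 1) => [->|m1]; first by rewrite eqxx.
  case: (m =P 2) => [->|m2]; first by rewrite eqxx orbT.
  case: (m =P n.-1) => [->|m3]; first by rewrite eqxx !orbT.
  case: (m =P n) => [->|m4]; first by rewrite eqxx !orbT.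
  exfalso.
  have Hsz : forall j, 1 <= j <= n -> #|N j| <= #|N m|.
    by move=> j Hj; change (d j <= d m); rewrite -Hmax; apply: dmax.
  have [p Ep] : exists p, m = p.+3 by exists (m - 3); clia.
  subst m.
  have ac : N p.+1 \subset N p.+3.
    by apply: (sub_of_card (Hcmp p.+1 p.+3 ltac:(clia) ltac:(clia) ltac:(clia)) (Hsz p.+1 ltac:(clia))).
  have qc : N p.+4.+1 \subset N p.+3.
    by apply: (sub_of_card (Hcmp p.+4.+1 p.+3 ltac:(clia) ltac:(clia) ltac:(clia)) (Hsz p.+4.+1 ltac:(clia))).
  have [_ bc] : ~~ (N p.+2 \subset N p.+3) /\ ~~ (N p.+3 \subset N p.+2) by apply: Hinc; clia.
  have [cb cp] : ~~ (N p.+3 \subset N p.+4) /\ ~~ (N p.+4 \subset N p.+3) by apply: Hinc; clia.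
  have [ab ba] : ~~ (N p.+1 \subset N p.+2) /\ ~~ (N p.+2 \subset N p.+1) by apply: Hinc; clia.
  have [pq qp] : ~~ (N p.+4 \subset N p.+4.+1) /\ ~~ (N p.+4.+1 \subset N p.+4) by apply: Hinc; clia.
  have := Hinc p.+2; rewrite -/N => /(_ ltac:(clia)) [bc' _].
  case: (Hcmp p.+2 p.+4 ltac:(clia) ltac:(clia) ltac:(clia)) => H.
    case: (Hcmp p.+2 p.+4.+1 ltac:(clia) ltac:(clia) ltac:(clia)) => H2.
      by rewrite (subset_trans H2 qc) in bc'.
    by rewrite (subset_trans H2 H) in qp.
  case: (Hcmp p.+1 p.+4 ltac:(clia) ltac:(clia) ltac:(clia)) => H2.
    by rewrite (subset_trans H2 H) in ab.
  by rewrite (subset_trans H2 ac) in cp.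
move=> Hmax1.
have P1 : forall i j, 1 <= i -> i + 2 <= j <= n -> N j \subset N i.
  elim=> [//|[|i] IH] j _ Hj.
    apply: sub_of_card; first by apply: Hcmp; clia.
    by change (d j <= d 1); rewrite -Hmax1; apply: dmax; clia.
  have Hji : N j \subset N i.+1 by apply: IH; clia.
  case: (Hcmp i.+2 j ltac:(clia) ltac:(clia) ltac:(clia)) => // H.
  have [_ /negP] := Hinc i.+1 ltac:(clia).
  by case; exact: subset_trans H Hji.
have P1' : forall i j, 1 <= i -> i + 2 <= j <= n -> d j <= d i /\ N j \subset N i.
  by move=> i j Hi Hj; split; [apply: subset_leq_card|]; apply: P1.
have P2 : forall i, 1 <= i <= n -> \bigcup_(i + 2 <= j < n.+1) N j \subset N i.
  move=> i Hi; apply: bigcup_seq_sub => j; rewrite mem_index_iota => Hj.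
  by apply: P1; clia.
split => //.
- rewrite big_ltn; last clia.
  rewrite big_ltn; last clia.
  rewrite setUA; apply/setUidPl.
  exact: subset_trans (P2 1 ltac:(clia)) (subsetUl _ _).
- move=> k Hk; split => H.
    by apply: (proj1 (P1' _ _ _ _)); clia.
  by apply: (proj1 (P1' _ _ _ _)); clia.
have lb : forall i, 1 <= i <= n -> minn (d n.-1) (d n) <= d i.
  move=> i Hi.
  case: (ltnP i n.-1) => H.
    by apply: leq_trans (geq_minr _ _) (proj1 (P1' i n _ _)); clia.
  case: (i =P n) => [->|ne]; first exact: geq_minr.
  have -> : i = n.-1 by clia.
  exact: geq_minl.
have E : \big[minn/d 1]_(1 <= i < n.+1) d i = minn (d n.-1) (d n).
  apply/eqP; rewrite eqn_leq; apply/andP; split.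
    rewrite leq_min !bigmin_le // mem_index_iota; clia.
  apply: bigmin_ge; last by apply: lb; clia.
  by move=> i; rewrite mem_index_iota => Hi; apply: lb; clia.
rewrite E !inE; case: (leqP (d n.-1) (d n)) => H.
  by rewrite eqxx.
by rewrite eqxx orbT.
Qed.
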